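(* Let $n\ge2$ and let $\mathcal{S}$ be a quadric hypersurface in $\mathbb{R}^n$ containing at least two points but no line, with an affine change of variables $\mathbf{s}=T\mathbf{s}'+\mathbf{v}$ bringing it into one of the normal forms (1)–(3), and with the associated parameterisation $\boldsymbol{\sigma}(\mathbf{t})=T\boldsymbol{\sigma}'(\mathbf{t})+\mathbf{v}$, $\mathbf{t}\in D$, described in the context. Let $O\subseteq D\setminus\sigma_1^{-1}(0)$ be a nonempty open set. Then there is $\mathbf{t}\in O$ such that \[\det\left(\frac{\partial\overline{\boldsymbol{\sigma}}'(\mathbf{t})}{\partial\mathbf{t}}\right)\neq0,\] where $\overline{\boldsymbol{\sigma}}'=(\sigma_1',\dots,\sigma_{n-1}')^T$.
   Context: Let $\mathcal{S}=\{\mathbf{s}\in\mathbb{R}^n:\tfrac12\mathbf{s}^TA\mathbf{s}+\mathbf{b}^T\mathbf{s}+c=0\}$ with $A$ a nonzero real symmetric matrix, and assume $\mathcal{S}$ contains at least two points but no line. Let $T$ be an invertible real $n\times n$ matrix and $\mathbf{v}\in\mathbb{R}^n$ such that under $\mathbf{s}=T\mathbf{s}'+\mathbf{v}$ the equation of $\mathcal{S}$ becomes one of: (1) (when $\operatorname{rk}A=n-1$) $\sum_{j=1}^{n-1}\epsilon_js_j'^2=s_n'$ with $\epsilon_j\in\{-1,1\}$; (2) (when $\operatorname{rk}A=n$ and $A$ has eigenvalues of both signs) $s_1's_n'+\sum_{j=2}^{n-1}\epsilon_js_j'^2=c'$ with $c'\neq0$, $\epsilon_j\in\{-1,1\}$;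 (3) (when $\operatorname{rk}A=n$ and all eigenvalues of $A$ have the same sign) $\sum_{j=1}^ns_j'^2=1$. The parameterisation $\boldsymbol{\sigma}'=(\sigma_1',\dots,\sigma_n')^T$ of the normal form is: in case (1), $\sigma_j'(\mathbf{t})=t_j$ for $j\le n-1$, $\sigma_n'(\mathbf{t})=\sum_{j=1}^{n-1}\epsilon_jt_j^2$, $D=\mathbb{R}^{n-1}$; in case (2), $\sigma_j'(\mathbf{t})=t_j$ for $j\le n-1$, $\sigma_n'(\mathbf{t})=\frac{1}{t_1}\big(c'-\sum_{j=2}^{n-1}\epsilon_jt_j^2\big)$, $D=(\mathbb{R}\setminus\{0\})\times\mathbb{R}^{n-2}$; in case (3), $\boldsymbol{\sigma}'(\mathbf{t})=\boldsymbol{\tau}(\boldsymbol{\varphi})$ with $\varphi_j=2\arctan(t_j)$, where $\boldsymbol{\tau}$ is the spherical-coordinate map $\tau_1=\cos\varphi_1$, $\tau_k=\sin\varphi_1\cdots\sin\varphi_{k-1}\cos\varphi_k$ for $2\le k\le n-1$, $\tau_n=\sin\varphi_1\cdots\sin\varphi_{n-1}$ (so each component is rational in $\mathbf{t}$ via $\cos\varphi_j=\frac{1-t_j^2}{1+t_j^2}$, $\sin\varphi_j=\frac{2t_j}{1+t_j^2}$), $D=\mathbb{R}^{n-1}$. Then $\boldsymbol{\sigma}(\mathbf{t})=T\boldsymbol{\sigma}'(\mathbf{t})+\mathbf{v}$ with components $\sigma_1,\dots,\sigma_n$, and $\sigma_1^{-1}(0)$ is the zero set of $\sigma_1$. *)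

(* Defs.v *)
From HB Require Import structures.
From mathcomp Require Import all_boot all_order all_algebra.
From mathcomp Require Import all_classical all_reals all_analysis.
Set Implicit Arguments. Unset Strict Implicit. Unset Printing Implicit Defensive.
Import Order.TTheory GRing.Theory Num.Theory.
Import numFieldNormedType.Exports.
Local Open Scope classical_set_scope.
Local Open Scope ring_scope.

Section QuadricDefs.
Variable R : realType.

(* 0-indexed coordinate access by a natural number (0 outside the range).
   Coordinate k here is coordinate k+1 of the paper. *)
Definition rcoord (m : nat) (t : 'rV[R]_m) (k : nat) : R :=
  if @insub _ (fun i => (i < m)%N) 'I_m k is Some j then t 0 j else 0.
Definition ccoord (m : nat) (s : 'cV[R]_m) (k : nat) : R :=
  if @insub _ (fun i => (i < m)%N) 'I_m k is Some j then s j 0 else 0.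

Definition quadric (n : nat) (A : 'M[R]_n) (b : 'cV[R]_n) (c : R)
  : set 'cV[R]_n :=
  [set s | (s^T *m A *m s) 0 0 / 2 + (b^T *m s) 0 0 + c = 0].

Definition contains_line (n : nat) (S : set 'cV[R]_n) : Prop :=
  exists (p d : 'cV[R]_n), d != 0 /\ forall l : R, S (p + l *: d).

Definition has_two_points (n : nat) (S : set 'cV[R]_n) : Prop :=
  exists (x y : 'cV[R]_n), S x /\ S y /\ x != y.

Inductive nfcase := NF1 | NF2 | NF3.

Definition case_cond (n : nat) (A : 'M[R]_n) (cs : nfcase) : Prop :=
  match cs with
  | NF1 => \rank A = n.-1
  | NF2 => \rank A = n /\
           (exists a, eigenvalue A a /\ 0 < a) /\
           (exists a, eigenvalue A a /\ a < 0)
  | NF3 => \rank A = n /\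
           ((forall a, eigenvalue A a -> 0 < a) \/
            (forall a, eigenvalue A a -> a < 0))
  end.

Definition param_cond (n : nat) (cs : nfcase) (eps : nat -> R) (c' : R) : Prop :=
  match cs with
  | NF1 => forall j, (j < n.-1)%N -> eps j = 1 \/ eps j = -1
  | NF2 => c' != 0 /\
           forall j, (1 <= j < n.-1)%N -> eps j = 1 \/ eps j = -1
  | NF3 => True
  end.

Definition nf_eq (n : nat) (cs : nfcase) (eps : nat -> R) (c' : R)
  (s' : 'cV[R]_n) : Prop :=
  match cs with
  | NF1 => \sum_(0 <= j < n.-1) eps j * ccoord s' j ^+ 2 = ccoord s' n.-1
  | NF2 => ccoord s' 0 * ccoord s' n.-1
           + \sum_(1 <= j < n.-1) eps j * ccoord s' j ^+ 2 = c'
  | NF3 => \sum_(0 <= j < n) ccoord s' j ^+ 2 = 1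
  end.

Definition phi (m : nat) (t : 'rV[R]_m) (j : nat) : R := 2 * atan (rcoord t j).

Definition sigma'_comp (n : nat) (cs : nfcase) (eps : nat -> R) (c' : R)
  (t : 'rV[R]_n.-1) (k : nat) : R :=
  match cs with
  | NF1 => if (k < n.-1)%N then rcoord t k
           else \sum_(0 <= j < n.-1) eps j * rcoord t j ^+ 2
  | NF2 => if (k < n.-1)%N then rcoord t k
           else (c' - \sum_(1 <= j < n.-1) eps j * rcoord t j ^+ 2) / rcoord t 0
  | NF3 => if (k < n.-1)%N then
             (\prod_(0 <= j < k) sin (phi t j)) * cos (phi t k)
           else \prod_(0 <= j < n.-1) sin (phi t j)
  end.

Definition sigma' (n : nat) (cs : nfcase) (eps : nat -> R) (c' : R)
  (t : 'rV[R]_n.-1) : 'cV[R]_n :=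
  \col_(k < n) sigma'_comp cs eps c' t k.

Definition param_dom (n : nat) (cs : nfcase) : set 'rV[R]_n.-1 :=
  match cs with
  | NF2 => [set t | rcoord t 0 != 0]
  | _ => setT
  end.

Definition sigma (n : nat) (T : 'M[R]_n) (v : 'cV[R]_n) (cs : nfcase)
  (eps : nat -> R) (c' : R) (t : 'rV[R]_n.-1) : 'cV[R]_n :=
  T *m sigma' cs eps c' t + v.

Definition jac_sigma'bar (n : nat) (cs : nfcase) (eps : nat -> R) (c' : R)
  (t : 'rV[R]_n.-1) : 'M[R]_n.-1 :=
  \matrix_(i < n.-1, j < n.-1)
     derive (fun u : 'rV[R]_n.-1 => sigma'_comp cs eps c' u i) t
            (delta_mx 0 j : 'rV[R]_n.-1).

End QuadricDefs.

(* Main.v *)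
Require Import Defs.
From HB Require Import structures.
From mathcomp Require Import all_boot all_order all_algebra.
From mathcomp Require Import all_classical all_reals all_analysis.
Import Order.TTheory GRing.Theory Num.Theory.
Import numFieldNormedType.Exports.
Local Open Scope classical_set_scope.
Local Open Scope ring_scope.
Section S.
Variable R : realType.
Lemma derive_dir m (f : 'rV[R]_m -> R) a v :
  derive f a v = derive (fun h : R => f (h *: v + a)) 0 1.
Proof.
rewrite /derive; congr (lim (_ @ 0^')); apply/funext => h /=.
by rewrite scale0r add0r /GRing.scale /= mulr1 addr0.
Qed.
Lemma rcoordE m (t : 'rV[R]_m) (i : 'I_m) : rcoord t i = t 0 i.
Proof.
by rewrite /rcoord valK.
Qed.
Lemma rcoord_line m (t : 'rV[R]_m) (j : 'I_m) (h : R) k :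
  rcoord (h *: delta_mx 0 j + t) k = h * (k == j)%:R + rcoord t k.
Proof.
rewrite /rcoord; case: insubP => [i _ <-|/negbTE km].
  by rewrite !mxE eqxx /= mulr_natr.
have -> : (k == j) = false by apply/negbTE; apply: contraFN km => /eqP ->.
by rewrite mulr0 addr0.
Qed.
Lemma is_derive1_comp (f g : R -> R) (x df dg : R) :
  is_derive x 1 f df -> is_derive (f x) 1 g dg -> is_derive x 1 (g \o f) (dg * df).
Proof.
move=> hf hg.
have d1 : derivable f x 1 by case: hf.
have d2 : derivable g (f x) 1 by case: hg.
have dc : derivable (g \o f) x 1.
apply/derivable1_diffP; apply: differentiable_comp; exact/derivable1_diffP.
apply: DeriveDef => //.
rewrite -derive1E.
rewrite (derive1_comp d1 d2).
rewrite !derive1E.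
case: hf => _ ->; case: hg => _ ->.
by [].
Qed.
Lemma is_derive_lin (c d : R) : is_derive (0:R) 1 (fun h : R => c * h + d) c.
Proof.
have H1 := is_deriveZ c (is_derive_id (0:R) (1:R)).
have H2 := is_deriveD H1 (is_derive_cst d (0:R) (1:R)).
apply: is_derive_eq H2 _.
by rewrite addr0 /GRing.scale /= mulr1.
Qed.
Lemma derive_lin (c d : R) : derive (fun h : R => c * h + d) 0 1 = c.
Proof. by case: (is_derive_lin c d). Qed.
Lemma is_derive_diag (P a : R) :
  is_derive (0:R) 1 (fun h : R => P * cos (2 * atan (1 * h + a)))
    (P * (- sin (2 * atan a) * (2 * (1 + a ^+ 2)^-1 * 1))).
Proof.
have H1 := is_derive_lin 1 a.
have H2 := is_deriveZ 2 (is_derive1_atan (1 * 0 + a)).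
have H3 := is_derive1_comp _ _ _ _ _ H1 H2.
have H4 := is_derive1_comp _ _ _ _ _ H3 (is_derive_cos _).
have H5 := is_deriveZ P H4.
apply: is_derive_eq H5 _.
by rewrite /= mulr0 add0r.
Qed.

Lemma exists_nz m (O : set 'rV[R]_m) : open O -> O !=set0 ->
  exists t, O t /\ forall j, t 0 j != 0.
Proof.
move=> oO [t0 Ot0].
have : open_nbhs t0 O by [].
rewrite open_nbhsE => -[_ /nbhs_ballP [e /= e0 He]].
exists (\row_j (if t0 0 j == 0 then e / 2 else t0 0 j)); split; last first.
  move=> j; rewrite mxE; case: ifP => [_|/negbT nz] //.
  by apply: lt0r_neq0; rewrite divr_gt0.
apply: He.
rewrite /ball /=; split => // i j; rewrite !ord1 mxE.
case: ifP => [/eqP t00|_]; last exact: ballxx.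
rewrite t00 -ball_normE /ball_ /= sub0r normrN gtr0_norm ?divr_gt0 //.
by rewrite ltr_pdivrMr // ltr_pMr // ltr1n.
Qed.

Lemma phi_line m (t : 'rV[R]_m) (j : 'I_m) (h : R) l :
  phi (h *: delta_mx 0 j + t) l = 2 * atan ((l == j)%:R * h + rcoord t l).
Proof. by rewrite /phi rcoord_line (mulrC h). Qed.

Lemma jac_id n (cs : nfcase) (eps : nat -> R) (c' : R) (t : 'rV[R]_n.-1) : cs <> NF3 ->
  jac_sigma'bar cs eps c' t = 1%:M.
Proof.
move=> hcs; apply/matrixP => i j; rewrite !mxE derive_dir.
have -> : (fun h : R => sigma'_comp cs eps c' (h *: delta_mx 0 j + t) i)
   = (fun h => (i == j)%:R * h + rcoord t i).
  by apply/funext => h; case: cs hcs => // _; rewrite /sigma'_comp ltn_ord rcoord_line mulrC.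
by rewrite derive_lin.
Qed.

Lemma jac3_upper n (eps : nat -> R) (c' : R) (t : 'rV[R]_n.-1) (i j : 'I_n.-1) : (i < j)%N ->
  jac_sigma'bar NF3 eps c' t i j = 0.
Proof.
move=> ij; rewrite mxE derive_dir.
have -> : (fun h : R => sigma'_comp NF3 eps c' (h *: delta_mx 0 j + t) i)
   = (fun _ => sigma'_comp NF3 eps c' t i).
  apply/funext => h; rewrite /sigma'_comp ltn_ord.
  congr (_ * _).
    apply: eq_big_nat => l /andP[_ li].
    rewrite phi_line.
    have -> : (l == j) = false by exact: ltn_eqF (ltn_trans li ij).
    by rewrite mul0r add0r.
  rewrite phi_line.
  have -> : (nat_of_ord i == j) = false by exact: ltn_eqF ij.
  by rewrite mul0r add0r.
exact: derive_cst.
Qed.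

Lemma jac3_diag n (eps : nat -> R) (c' : R) (t : 'rV[R]_n.-1) (i : 'I_n.-1) :
  jac_sigma'bar NF3 eps c' t i i =
  (\prod_(0 <= l < i) sin (phi t l)) *
    (- sin (2 * atan (rcoord t i)) * (2 * (1 + rcoord t i ^+ 2)^-1 * 1)).
Proof.
rewrite mxE derive_dir.
have -> : (fun h : R => sigma'_comp NF3 eps c' (h *: delta_mx 0 i + t) i)
   = (fun h => (\prod_(0 <= l < i) sin (phi t l)) * cos (2 * atan (1 * h + rcoord t i))).
  apply/funext => h; rewrite /sigma'_comp ltn_ord phi_line eqxx.
  congr (_ * _); apply: eq_big_nat => l /andP[_ li].
  rewrite phi_line.
  have -> : (l == i) = false by rewrite ltn_eqF.
  by rewrite mul0r add0r.
by case: (is_derive_diag (\prod_(0 <= l < i) sin (phi t l)) (rcoord t i)).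
Qed.
Lemma sin2atan_neq0 (a : R) : a != 0 -> sin (2 * atan a) != 0.
Proof.
move=> a0; rewrite mulr_natl sin_mulr2n mulrn_eq0 /=.
have c0 : cos (atan a) != 0.
  by apply/lt0r_neq0/cos_gt0_pihalf; rewrite atan_gtNpi2 atan_ltpi2.
apply: mulf_neq0 => //; apply: contra a0 => /eqP s0.
by rewrite -[a]atanK /tan s0 mul0r.
Qed.
End S.

Theorem lemma4 (R : realType) (n : nat) (hn : (2 <= n)%N)
  (A : 'M[R]_n) (b : 'cV[R]_n) (c : R)
  (hA0 : A != 0) (hAsym : A^T = A)
  (hS2 : has_two_points (quadric A b c))
  (hSline : ~ contains_line (quadric A b c))
  (T : 'M[R]_n) (hT : T \in unitmx) (v : 'cV[R]_n)
  (cs : nfcase) (eps : nat -> R) (c' : R)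
  (hcase : case_cond A cs) (hparam : param_cond n cs eps c')
  (hnf : forall s' : 'cV[R]_n,
           quadric A b c (T *m s' + v) <-> nf_eq cs eps c' s')
  (O : set 'rV[R]_n.-1) (hOopen : open O) (hOne : O !=set0)
  (hOsub : O `<=` @param_dom R n cs `\`
                  [set t | ccoord (sigma T v cs eps c' t) 0 = 0]) :
  exists2 t, O t & \det (jac_sigma'bar cs eps c' t) != 0.
Proof.
case: cs hcase hparam hnf hOsub => _ _ _ hOsub.
- by case: hOne => t Ot; exists t => //; rewrite jac_id // det1 oner_neq0.
- by case: hOne => t Ot; exists t => //; rewrite jac_id // det1 oner_neq0.
have [t [Ot tnz]] := @exists_nz R _ O hOopen hOne.
exists t => //.
rewrite det_trig; last by apply/is_trig_mxP => i j ij; exact: jac3_upper.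
apply/prodf_neq0 => i _; rewrite jac3_diag.
have rnz : forall l, (l < n.-1)%N -> rcoord t l != 0.
  by move=> l lm; rewrite (@rcoordE R _ t (Ordinal lm)).
apply: mulf_neq0.
  rewrite prodf_seq_neq0; apply/allP => l; rewrite mem_index_iota => /andP[_ li] /=.
  exact/sin2atan_neq0/rnz/(ltn_trans li (ltn_ord i)).
apply: mulf_neq0; first by rewrite oppr_eq0; exact/sin2atan_neq0/rnz.
rewrite mulr1; apply: mulf_neq0 => //; rewrite invr_eq0.
by rewrite paddr_eq0 ?ler01 ?sqr_ge0 // oner_eq0.
Qed.
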